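(* Let $v_1,\dots,v_n:[0,1]\to\mathbb R_{\ge0}$ be monotone non-decreasing subadditive valuations with budgets $B_i>0$, let $\bar v_i(y)=\min\{v_i(y),B_i\}$, let $r_1=\arg\max_i\bar v_i(\frac12)$, and let $\bar W^\dagger=\sup\{\bar W(y): y\in\mathbb R^n_{\ge0},\ y_{r_1}=0,\ \sum_{i\ne r_1}y_i=\frac12\}$. Then $\bar v_{r_1}(\frac12)+\bar W^\dagger\ge\frac12\bar W^*$.
   Context: Liquid welfare of an allocation $y\in\mathbb R^n_{\ge0}$: $\bar W(y)=\sum_i\min\{v_i(y_i),B_i\}$; $\bar W^*=\sup\{\bar W(y):y\in\mathbb R^n_{\ge0},\sum_iy_i=1\}$. Subadditive means $v_i(a+b)\le v_i(a)+v_i(b)$ whenever $a,b,a+b\in[0,1]$. *)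

(* Defs.v *)
From Stdlib Require Import Reals Lra List.
Import ListNotations.
Open Scope R_scope.

Definition sumR (n : nat) (f : nat -> R) : R :=
  fold_right Rplus 0 (map f (seq 0 n)).

Definition vbar (v : nat -> R -> R) (B : nat -> R) (i : nat) (x : R) : R :=
  Rmin (v i x) (B i).

Definition Wbar (n : nat) (v : nat -> R -> R) (B : nat -> R) (y : nat -> R) : R :=
  sumR n (fun i => vbar v B i (y i)).

Definition nonneg_alloc (n : nat) (y : nat -> R) : Prop :=
  forall i, (i < n)%nat -> 0 <= y i.

Definition Wstar_set (n : nat) (v : nat -> R -> R) (B : nat -> R) (w : R) : Prop :=
  exists y, nonneg_alloc n y /\ sumR n y = 1 /\ w = Wbar n v B y.

Definition Wdagger_set (n : nat) (v : nat -> R -> R) (B : nat -> R) (r : nat) (w : R) : Prop :=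
  exists y, nonneg_alloc n y /\ y r = 0 /\
    sumR n (fun i => if Nat.eqb i r then 0 else y i) = 1/2 /\
    w = Wbar n v B y.

Definition monotone01 (f : R -> R) : Prop :=
  forall a b, 0 <= a -> a <= b -> b <= 1 -> f a <= f b.

Definition subadditive01 (f : R -> R) : Prop :=
  forall a b, 0 <= a <= 1 -> 0 <= b <= 1 -> 0 <= a + b <= 1 -> f (a + b) <= f a + f b.

(* Main.v *)
Require Import Defs.
From Stdlib Require Import Reals Lra Lia List Arith.
Import ListNotations.
Open Scope R_scope.

Lemma fold_plus_c (c : R) (l : list R) : fold_right Rplus c l = c + fold_right Rplus 0 l.
Proof. induction l; simpl; [lra| rewrite IHl; lra]. Qed.

Lemma sumR_S n f : sumR (S n) f = sumR n f + f n.
Proof.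
  unfold sumR. rewrite seq_S, map_app, fold_right_app. simpl.
  rewrite fold_plus_c. lra.
Qed.

Lemma sumR_0 f : sumR 0 f = 0.
Proof. reflexivity. Qed.

Lemma sumR_le n f g : (forall i, (i < n)%nat -> f i <= g i) -> sumR n f <= sumR n g.
Proof.
  induction n; intros H; [rewrite !sumR_0; lra|].
  rewrite !sumR_S. assert (f n <= g n) by (apply H; lia).
  assert (sumR n f <= sumR n g) by (apply IHn; intros; apply H; lia). lra.
Qed.

Lemma sumR_ext n f g : (forall i, (i < n)%nat -> f i = g i) -> sumR n f = sumR n g.
Proof.
  intros H; apply Rle_antisym; apply sumR_le; intros i Hi; rewrite H; lra || auto; lra.
Qed.

Lemma sumR_plus n f g : sumR n (fun i => f i + g i) = sumR n f + sumR n g.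
Proof. induction n; [rewrite !sumR_0; lra| rewrite !sumR_S, IHn; lra]. Qed.

Lemma sumR_scal n c f : sumR n (fun i => c * f i) = c * sumR n f.
Proof. induction n; [rewrite !sumR_0; lra| rewrite !sumR_S, IHn; lra]. Qed.

Lemma sumR_ind n k c : (k < n)%nat -> sumR n (fun i => if Nat.eqb i k then c else 0) = c.
Proof.
  induction n; intros Hk; [lia|]. rewrite sumR_S.
  destruct (Nat.eqb_spec n k).
  - subst. assert (sumR k (fun i => if Nat.eqb i k then c else 0) = 0).
    { transitivity (sumR k (fun _ => 0 * 0)).
      - apply sumR_ext. intros i Hi. destruct (Nat.eqb_spec i k); [lia|lra].
      - rewrite sumR_scal. lra. }
    lra.
  - rewrite IHn by lia. lra.
Qed.

Lemma sumR_split n f k : (k < n)%nat ->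
  sumR n f = f k + sumR n (fun i => if Nat.eqb i k then 0 else f i).
Proof.
  intros Hk.
  rewrite (sumR_ext n f (fun i => (if Nat.eqb i k then f k else 0) + (if Nat.eqb i k then 0 else f i))).
  - rewrite sumR_plus, sumR_ind by auto. reflexivity.
  - intros i _. destruct (Nat.eqb_spec i k); subst; lra.
Qed.

Lemma sumR_nonneg n f : (forall i, (i < n)%nat -> 0 <= f i) -> 0 <= sumR n f.
Proof.
  induction n; intros H; [rewrite sumR_0; lra|]. rewrite sumR_S.
  assert (0 <= f n) by (apply H; lia).
  assert (0 <= sumR n f) by (apply IHn; intros; apply H; lia). lra.
Qed.

Theorem mainTheorem15 (n : nat) (v : nat -> R -> R) (B : nat -> R) (r1 : nat)
  (Wstar Wdagger : R)
  (hv_nonneg : forall i, (i < n)%nat -> forall x, 0 <= x <= 1 -> 0 <= v i x)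
  (hv_mono : forall i, (i < n)%nat -> monotone01 (v i))
  (hv_sub : forall i, (i < n)%nat -> subadditive01 (v i))
  (hB : forall i, (i < n)%nat -> 0 < B i)
  (hr1 : (r1 < n)%nat)
  (hr1max : forall i, (i < n)%nat -> vbar v B i (1/2) <= vbar v B r1 (1/2))
  (hWstar : is_lub (Wstar_set n v B) Wstar)
  (hWdagger : is_lub (Wdagger_set n v B r1) Wdagger) :
  vbar v B r1 (1/2) + Wdagger >= 1/2 * Wstar.
Proof.
  assert (vmono : forall i a b, (i < n)%nat -> 0 <= a -> a <= b -> b <= 1 ->
            vbar v B i a <= vbar v B i b).
  { intros i a b Hi Ha Hab Hb. pose proof (hv_mono i Hi a b Ha Hab Hb).
    unfold vbar, Rmin. destruct (Rle_dec (v i a) (B i)); destruct (Rle_dec (v i b) (B i)); lra. }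
  assert (vhalf : forall i x, (i < n)%nat -> 0 <= x <= 1 ->
            vbar v B i x <= 2 * vbar v B i (x/2)).
  { intros i x Hi Hx. pose proof (hv_sub i Hi (x/2) (x/2)) as Hs.
    replace (x/2 + x/2) with x in Hs by field.
    assert (v i x <= v i (x/2) + v i (x/2)) by (apply Hs; lra).
    pose proof (hB i Hi).
    unfold vbar, Rmin. destruct (Rle_dec (v i x) (B i)); destruct (Rle_dec (v i (x/2)) (B i)); lra. }
  assert (vnn : forall i x, (i < n)%nat -> 0 <= x <= 1 -> 0 <= vbar v B i x).
  { intros i x Hi Hx. pose proof (hv_nonneg i Hi x Hx). pose proof (hB i Hi).
    unfold vbar, Rmin. destruct (Rle_dec (v i x) (B i)); lra. }
  assert (Hn : (2 <= n)%nat).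
  { destruct n as [|[|n']]; try lia. exfalso.
    assert (r1 = 0%nat) by lia. subst r1.
    assert (Hub : is_upper_bound (Wdagger_set 1 v B 0) (Wdagger - 1)).
    { intros w [y [_ [_ [hs _]]]]. unfold sumR in hs. simpl in hs. lra. }
    pose proof (proj2 hWdagger _ Hub). lra. }
  set (j := if Nat.eqb r1 0 then 1%nat else 0%nat).
  assert (Hj : (j < n)%nat) by (unfold j; destruct (Nat.eqb_spec r1 0); lia).
  assert (Hjr : j <> r1) by (unfold j; destruct (Nat.eqb_spec r1 0); lia).
  apply Rle_ge.
  cut (Wstar <= 2 * (vbar v B r1 (1/2) + Wdagger)); [lra|].
  apply (proj2 hWstar).
  intros w [y [hy [hs ->]]].
  assert (hy1 : forall i, (i < n)%nat -> y i <= 1).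
  { intros i Hi. rewrite (sumR_split n y i Hi) in hs.
    assert (0 <= sumR n (fun k => if Nat.eqb k i then 0 else y k)).
    { apply sumR_nonneg. intros k Hk. destruct (Nat.eqb k i); [lra| auto]. }
    lra. }
  set (z := fun i => if Nat.eqb i r1 then 0 else
                     if Nat.eqb i j then (y j + y r1)/2 else y i / 2).
  assert (Hzd : Wdagger_set n v B r1 (Wbar n v B z)).
  { exists z. split; [|split; [|split]].
    - intros i Hi. unfold z. pose proof (hy i Hi). pose proof (hy j Hj). pose proof (hy r1 hr1).
      destruct (Nat.eqb i r1); [lra|]. destruct (Nat.eqb i j); lra.
    - unfold z. rewrite Nat.eqb_refl. reflexivity.
    - rewrite (sumR_ext n _ (fun i => (1/2) * y i + ((if Nat.eqb i j then y r1 / 2 else 0)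
                 + (-1) * (if Nat.eqb i r1 then y r1 / 2 else 0)))).
      + rewrite sumR_plus, sumR_scal, sumR_plus, sumR_scal, !sumR_ind by auto. rewrite hs. lra.
      + intros i Hi. unfold z. destruct (Nat.eqb_spec i r1); destruct (Nat.eqb_spec i j); try lia; try subst i; lra.
    - reflexivity. }
  pose proof (proj1 hWdagger _ Hzd) as HWz.
  unfold Wbar. rewrite (sumR_split n _ r1 hr1).
  unfold Wbar in HWz. rewrite (sumR_split n _ r1 hr1) in HWz.
  assert (Hz0 : 0 <= vbar v B r1 (z r1)).
  { apply vnn; auto. unfold z. rewrite Nat.eqb_refl. lra. }
  assert (Hr : vbar v B r1 (y r1) <= 2 * vbar v B r1 (1/2)).
  { pose proof (hy r1 hr1). pose proof (hy1 r1 hr1).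
    apply Rle_trans with (2 * vbar v B r1 (y r1 / 2)). apply vhalf; auto; lra.
    apply Rmult_le_compat_l; [lra|]. apply vmono; auto; lra. }
  assert (Hsum : sumR n (fun i => if Nat.eqb i r1 then 0 else vbar v B i (y i)) <=
                 2 * sumR n (fun i => if Nat.eqb i r1 then 0 else vbar v B i (z i))).
  { rewrite <- sumR_scal. apply sumR_le. intros i Hi.
    pose proof (hy i Hi). pose proof (hy1 i Hi). pose proof (hy r1 hr1).
    destruct (Nat.eqb_spec i r1); [lra|].
    apply Rle_trans with (2 * vbar v B i (y i / 2)). apply vhalf; auto; lra.
    apply Rmult_le_compat_l; [lra|]. apply vmono; auto; try lra.
    unfold z. destruct (Nat.eqb_spec i r1); [lia|].
    destruct (Nat.eqb_spec i j); [subst i; lra|lra].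
    unfold z. destruct (Nat.eqb_spec i r1); [lia|].
    assert (y j + y r1 <= 1).
    { rewrite (sumR_split n y r1 hr1) in hs.
      rewrite (sumR_split n _ j Hj) in hs.
      assert (0 <= sumR n (fun i0 : nat => if Nat.eqb i0 j then 0
               else if Nat.eqb i0 r1 then 0 else y i0)).
      { apply sumR_nonneg. intros k Hk. destruct (Nat.eqb k j); [lra|].
        destruct (Nat.eqb k r1); [lra| auto]. }
      destruct (Nat.eqb_spec j r1); [lia|]. lra. }
    destruct (Nat.eqb_spec i j); lra. }
  lra.
Qed.
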